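(* Let $\widetilde\nabla$ be the canonical snm-connection on $\mathbb R^3$ determined by $\mathsf C=\partial_z$. Let $c\in\mathbb R\setminus\{0,\tfrac12\}$ and let $$u(x,y)=-\frac1c\log\cos(cx)-\frac{2c-1}{c}\log\cos\Big(\frac{cy}{2c-1}\Big)$$ on a connected open set $\Omega\subset\mathbb R^2$ on which $\cos(cx)>0$ and $\cos\big(cy/(2c-1)\big)>0$. Then the graph $M=\{(x,y,u(x,y)):(x,y)\in\Omega\}$ satisfies $K(p)=\widetilde K(T_pM)$ at every point $p\in M$ (equivalently, $G=\langle \partial_z,N\rangle H$ on $M$, where $N$ is the upward unit normal).
   Context: Let $\langle\cdot,\cdot\rangle$ be the Euclidean metric on $\mathbb R^3$ and $\widetilde\nabla^0$ its Levi-Civita connection (the ordinary directional derivative). Given a smooth vector field $\mathsf C$ on $\mathbb R^3$, the semi-symmetric non-metric connection (snm-connection) determined by $\mathsf C$ is $\widetilde\nabla_XY=\widetilde\nabla^0_XY+\langle \mathsf C,Y\rangle X$. Its curvature tensor is $\widetilde R(X,Y)Z=\widetilde\nabla_X\widetilde\nabla_YZ-\widetilde\nabla_Y\widetilde\nabla_XZ-\widetilde\nabla_{[X,Y]}Z$. For a $2$-dimensional subspace $\pi\subset T_p\mathbb R^3$ with orthonormal basis $\{e_1,e_2\}$, its sectional curvature with respect to $\widetilde\nabla$ is $\widetilde K(\pi)=\frac12\big(\langle\widetilde R(e_1,e_2)e_2,e_1\rangle+\langle\widetilde R(e_2,e_1)e_1,e_2\rangle\big)$. For a surface $M$ immersed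 in $\mathbb R^3$, the induced connection is $\nabla_XY=(\widetilde\nabla_XY)^{\top}$ for tangent vector fields $X,Y$, with curvature tensor $R$ defined by the same formula as $\widetilde R$, and the sectional curvature of $M$ with respect to $\widetilde\nabla$ at $p$ is $K(p)=\frac12\big(\langle R(e_1,e_2)e_2,e_1\rangle+\langle R(e_2,e_1)e_1,e_2\rangle\big)$ for an orthonormal basis $\{e_1,e_2\}$ of $T_pM$. $G$ and $H$ denote the Gaussian and mean curvature (one half the trace of the shape operator for the second fundamental form $h(X,Y)=\langle\widetilde\nabla^0_XY,N\rangle$). *)

(* Defs.v *)
From Stdlib Require Import Reals.
From Coquelicot Require Import Coquelicot.
Open Scope R_scope.

Definition V3 : Type := (R * R * R)%type.
Definition v1 (v : V3) : R := fst (fst v).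
Definition v2 (v : V3) : R := snd (fst v).
Definition v3 (v : V3) : R := snd v.
Definition mkV (a b c : R) : V3 := (a, b, c).
Definition vadd (v w : V3) : V3 := mkV (v1 v + v1 w) (v2 v + v2 w) (v3 v + v3 w).
Definition vscal (k : R) (v : V3) : V3 := mkV (k * v1 v) (k * v2 v) (k * v3 v).
Definition vsub (v w : V3) : V3 := vadd v (vscal (-1) w).
Definition dot (v w : V3) : R := v1 v * v1 w + v2 v * v2 w + v3 v * v3 w.

Definition vderive (g : R -> V3) (t : R) : V3 :=
  mkV (Derive (fun s => v1 (g s)) t) (Derive (fun s => v2 (g s)) t)
      (Derive (fun s => v3 (g s)) t).

Definition ez : V3 := mkV 0 0 1.

Definition nabla0 (X Y : V3 -> V3) (p : V3) : V3 :=
  vderive (fun t => Y (vadd p (vscal t (X p)))) 0.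
Definition snm (C : V3) (X Y : V3 -> V3) (p : V3) : V3 :=
  vadd (nabla0 X Y p) (vscal (dot C (Y p)) (X p)).
Definition lie3 (X Y : V3 -> V3) (p : V3) : V3 := vsub (nabla0 X Y p) (nabla0 Y X p).
Definition Rtilde (C : V3) (X Y Z : V3 -> V3) (p : V3) : V3 :=
  vsub (vsub (snm C X (snm C Y Z) p) (snm C Y (snm C X Z) p)) (snm C (lie3 X Y) Z p).
Definition cstV (e : V3) : V3 -> V3 := fun _ => e.
Definition Ktilde (C : V3) (p e1 e2 : V3) : R :=
  / 2 * (dot (Rtilde C (cstV e1) (cstV e2) (cstV e2) p) e1
         + dot (Rtilde C (cstV e2) (cstV e1) (cstV e1) p) e2).

(** Points of M are parametrized by (x,y); vector fields along M are
    maps R -> R -> V3 (value at the point (x,y,u(x,y))). *)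
Definition graph (u : R -> R -> R) (x y : R) : V3 := mkV x y (u x y).
Definition pux (u : R -> R -> R) (x y : R) : R := Derive (fun t => u t y) x.
Definition puy (u : R -> R -> R) (x y : R) : R := Derive (fun t => u x t) y.
Definition normal (u : R -> R -> R) (x y : R) : V3 :=
  vscal (/ sqrt (1 + pux u x y ^ 2 + puy u x y ^ 2)) (mkV (- pux u x y) (- puy u x y) 1).
Definition tangent (u : R -> R -> R) (x y : R) (v : V3) : Prop := dot v (normal u x y) = 0.
Definition tproj (u : R -> R -> R) (x y : R) (v : V3) : V3 :=
  vsub v (vscal (dot v (normal u x y)) (normal u x y)).
(** Ambient directional derivative of a field W along M in the direction of a
    tangent field Z: a tangent vector (a,b,c) to the graph is the image of
    the parameter direction (a,b), so (nabla0_Z W) = a dW/dx + b dW/dy. *)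
Definition DM (Z W : R -> R -> V3) (x y : R) : V3 :=
  vadd (vscal (v1 (Z x y)) (vderive (fun t => W t y) x))
       (vscal (v2 (Z x y)) (vderive (fun t => W x t) y)).
Definition nablaM (u : R -> R -> R) (C : V3) (Z W : R -> R -> V3) (x y : R) : V3 :=
  tproj u x y (vadd (DM Z W x y) (vscal (dot C (W x y)) (Z x y))).
Definition lieM (Z W : R -> R -> V3) (x y : R) : V3 := vsub (DM Z W x y) (DM W Z x y).
Definition RM (u : R -> R -> R) (C : V3) (Z W V : R -> R -> V3) (x y : R) : V3 :=
  vsub (vsub (nablaM u C Z (nablaM u C W V) x y) (nablaM u C W (nablaM u C Z V) x y))
       (nablaM u C (lieM Z W) V x y).
(** tangent extension along M of a tangent vector e at (x0,y0): the tangent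
    field with the same (constant) parameter components as e. *)
Definition text (u : R -> R -> R) (e : V3) : R -> R -> V3 :=
  fun x y => mkV (v1 e) (v2 e) (v1 e * pux u x y + v2 e * puy u x y).
Definition KM (u : R -> R -> R) (C : V3) (x y : R) (e1 e2 : V3) : R :=
  / 2 * (dot (RM u C (text u e1) (text u e2) (text u e2) x y) e1
         + dot (RM u C (text u e2) (text u e1) (text u e1) x y) e2).

Definition orthonormal (e1 e2 : V3) : Prop :=
  dot e1 e1 = 1 /\ dot e2 e2 = 1 /\ dot e1 e2 = 0.

Definition open2 (U : R -> R -> Prop) : Prop :=
  forall x y, U x y -> exists eps, 0 < eps /\
    forall x' y', Rabs (x' - x) < eps -> Rabs (y' - y) < eps -> U x' y'.
Definition connected2 (O : R -> R -> Prop) : Prop :=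
  ~ exists U V : R -> R -> Prop, open2 U /\ open2 V /\
      (forall x y, O x y -> U x y \/ V x y) /\
      (exists x y, O x y /\ U x y) /\ (exists x y, O x y /\ V x y) /\
      (forall x y, O x y -> U x y -> V x y -> False).

Definition usol (c : R) (x y : R) : R :=
  - (1 / c) * ln (cos (c * x)) - ((2 * c - 1) / c) * ln (cos (c * y / (2 * c - 1))).

(* Main.v *)
Require Import Defs.
From Stdlib Require Import Reals Lra Psatz.
From Coquelicot Require Import Coquelicot.
Open Scope R_scope.

Definition kk c := c / (2*c-1).
Definition SS p q := 1+p^2+q^2.
Definition PP c p := c*(1+p^2).
Definition QQ c q := kk c*(1+q^2).
Definition ff c t := tan (c*t).
Definition gg c s := tan (c*s/(2*c-1)).
Definition good c t s := 0 < cos (c*t) /\ 0 < cos (c*s/(2*c-1)).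

Ltac toR := match goal with |- ?a = ?b => change (@eq R a b) end.
Ltac vsimp := unfold vsub, vadd, vscal, dot, mkV, v1, v2, v3; cbn [fst snd].

Lemma V3ext (v w : V3) : v1 v = v1 w -> v2 v = v2 w -> v3 v = v3 w -> v = w.
Proof. destruct v as [[a b] c], w as [[a' b'] c']. unfold v1, v2, v3; cbn. intros -> -> ->. reflexivity. Qed.

Lemma SS_pos p q : 0 < SS p q.
Proof. unfold SS. nra. Qed.

Lemma is_derive_val (f : R -> R) x l l' : is_derive f x l -> l = l' -> is_derive f x l'.
Proof. intros H ->; exact H. Qed.

Lemma L_pux c t s : c <> 0 -> 0 < cos (c*t) -> pux (usol c) t s = ff c t.
Proof. intros Hc H. unfold pux, usol, ff. apply is_derive_unique.
 auto_derive. lra. unfold tan. field_simplify; [reflexivity|lra|split;[lra|auto]]. Qed.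

Lemma L_puy c t s : c <> 0 -> 2*c-1 <> 0 -> 0 < cos (c*s/(2*c-1)) -> puy (usol c) t s = gg c s.
Proof. intros Hc H2 H. unfold puy, usol, gg. apply is_derive_unique.
 auto_derive. unfold Rdiv in *; lra. unfold tan, Rdiv. field. split; auto. lra. Qed.

Lemma L_f c t : 0 < cos (c*t) -> is_derive (ff c) t (PP c (ff c t)).
Proof. intros H. unfold ff, PP, tan. auto_derive. lra. toR. field. lra. Qed.

Lemma L_g c s : 2*c-1 <> 0 -> 0 < cos (c*s/(2*c-1)) -> is_derive (gg c) s (QQ c (gg c s)).
Proof. intros H2 H. unfold gg, QQ, kk, tan. auto_derive. unfold Rdiv in *; lra. toR. unfold Rdiv. field. lra. Qed.

Lemma loc_pos (h : R -> R) t : continuous h t -> 0 < h t -> locally t (fun r => 0 < h r).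
Proof. intros Hc Hp.
 assert (L: locally (h t) (fun z => 0 < z)).
 { exists (mkposreal _ Hp). intros z Hz. cbn in Hz. unfold ball in Hz; cbn in Hz.
   unfold AbsRing_ball, abs, minus, plus, opp in Hz; cbn in Hz. apply Rabs_lt_between in Hz. lra. }
 exact (Hc _ L). Qed.

Lemma loc1 c t : 0 < cos (c*t) -> locally t (fun r => 0 < cos (c*r)).
Proof. intros H. apply (loc_pos (fun r => cos (c*r))); auto.
 apply (ex_derive_continuous (V:=R_NormedModule)). auto_derive. auto. Qed.

Lemma loc2 c s : 2*c-1<>0 -> 0 < cos (c*s/(2*c-1)) -> locally s (fun r => 0 < cos (c*r/(2*c-1))).
Proof. intros H2 H. apply (loc_pos (fun r => cos (c*r/(2*c-1)))); auto.
 apply (ex_derive_continuous (V:=R_NormedModule)). auto_derive. auto. Qed.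

Lemma L_tproj c t s v : c <> 0 -> 2*c-1 <> 0 -> good c t s ->
  tproj (usol c) t s v =
  let p := ff c t in let q := gg c s in
  let d := - p * v1 v - q * v2 v + v3 v in
  mkV (v1 v + d / SS p q * p) (v2 v + d / SS p q * q) (v3 v - d / SS p q).
Proof. intros Hc H2 [Ht Hs]. unfold tproj, normal. rewrite L_pux, L_puy by auto.
 cbv zeta. set (p := ff c t). set (q := gg c s).
 assert (HS := SS_pos p q).
 assert (Hr : sqrt (1 + p^2 + q^2) * sqrt (1 + p^2 + q^2) = SS p q) by (apply sqrt_sqrt; unfold SS in *; lra).
 assert (Hr0 : sqrt (1 + p^2 + q^2) <> 0) by (intro E; rewrite E in Hr; lra).
 rewrite <- Hr. destruct v as [[v1_ v2_] v3_]. apply V3ext; vsimp; field; auto. Qed.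

Lemma L_vderive_loc (W : R -> V3) t A B C dA dB dC :
  locally t (fun r => W r = mkV (A r) (B r) (C r)) ->
  is_derive A t dA -> is_derive B t dB -> is_derive C t dC -> vderive W t = mkV dA dB dC.
Proof. intros HW HA HB HC. unfold vderive. apply V3ext; vsimp.
 - rewrite (Derive_ext_loc _ A). now apply is_derive_unique.
   eapply filter_imp; [|exact HW]. intros r Hr. rewrite Hr. reflexivity.
 - rewrite (Derive_ext_loc _ B). now apply is_derive_unique.
   eapply filter_imp; [|exact HW]. intros r Hr. rewrite Hr. reflexivity.
 - rewrite (Derive_ext_loc _ C). now apply is_derive_unique.
   eapply filter_imp; [|exact HW]. intros r Hr. rewrite Hr. reflexivity.
Qed.

Lemma der_prod1 (A B : R -> R) t s xt bt c: 0<cos(c*t) -> is_derive A t xt -> is_derive B t bt ->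
 is_derive (fun r => A r * ff c r + B r * gg c s) t (xt * ff c t + A t * PP c (ff c t) + bt * gg c s).
Proof. intros H HA HB.
 eapply is_derive_val.
 apply (is_derive_plus (fun r => A r * ff c r) (fun r => B r * gg c s)).
 apply (is_derive_mult A (ff c)). exact HA. apply L_f; exact H. intros; apply Rmult_comm.
 apply (is_derive_mult B (fun _ => gg c s)). exact HB. apply is_derive_const. intros; apply Rmult_comm.
 change (xt * ff c t + A t * PP c (ff c t) + (bt * gg c s + B t * 0) = xt * ff c t + A t * PP c (ff c t) + bt * gg c s). ring.
Qed.

Lemma der_prod2 (A B : R -> R) t s xs bs c: 2*c-1<>0 -> 0<cos(c*s/(2*c-1)) -> is_derive A s xs -> is_derive B s bs ->
 is_derive (fun r => A r * ff c t + B r * gg c r) s (xs * ff c t + bs * gg c s + B s * QQ c (gg c s)).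
Proof. intros H2 H HA HB.
 eapply is_derive_val.
 apply (is_derive_plus (fun r => A r * ff c t) (fun r => B r * gg c r)).
 apply (is_derive_mult A (fun _ => ff c t)). exact HA. apply is_derive_const. intros; apply Rmult_comm.
 apply (is_derive_mult B (gg c)). exact HB. apply L_g; assumption. intros; apply Rmult_comm.
 change (xs * ff c t + A s * 0 + (bs * gg c s + B s * QQ c (gg c s)) = xs * ff c t + bs * gg c s + B s * QQ c (gg c s)). ring.
Qed.

Definition nnA c a b al be xt xs p q :=
  a*xt+b*xs+(a*al*PP c p+b*be*QQ c q)*p/SS p q+(al*p+be*q)*a.
Definition nnB c a b al be bt bs p q :=
  a*bt+b*bs+(a*al*PP c p+b*be*QQ c q)*q/SS p q+(al*p+be*q)*b.

Lemma L_nab_gen c a b (Z Y : R -> R -> V3) t s (A1 B1 A2 B2 : R -> R) xt bt xs bs :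
 c <> 0 -> 2*c-1 <> 0 -> good c t s ->
 Z t s = mkV a b (a*ff c t + b*gg c s) ->
 locally t (fun r => Y r s = mkV (A1 r) (B1 r) (A1 r * ff c r + B1 r * gg c s)) ->
 locally s (fun r => Y t r = mkV (A2 r) (B2 r) (A2 r * ff c t + B2 r * gg c r)) ->
 is_derive A1 t xt -> is_derive B1 t bt -> is_derive A2 s xs -> is_derive B2 s bs ->
 A2 s = A1 t -> B2 s = B1 t ->
 nablaM (usol c) ez Z Y t s =
 mkV (nnA c a b (A1 t) (B1 t) xt xs (ff c t) (gg c s))
     (nnB c a b (A1 t) (B1 t) bt bs (ff c t) (gg c s))
     (nnA c a b (A1 t) (B1 t) xt xs (ff c t) (gg c s) * ff c t
      + nnB c a b (A1 t) (B1 t) bt bs (ff c t) (gg c s) * gg c s).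
Proof.
 intros Hc H2 Hg HZ HY1 HY2 HA1 HB1 HA2 HB2 EA EB.
 destruct Hg as [Ht Hs].
 unfold nablaM, DM.
 rewrite (L_vderive_loc (fun r => Y r s) t A1 B1 (fun r => A1 r * ff c r + B1 r * gg c s)
            xt bt (xt * ff c t + A1 t * PP c (ff c t) + bt * gg c s));
   [| exact HY1 | exact HA1 | exact HB1 | apply der_prod1; assumption].
 rewrite (L_vderive_loc (fun r => Y t r) s A2 B2 (fun r => A2 r * ff c t + B2 r * gg c r)
            xs bs (xs * ff c t + bs * gg c s + B2 s * QQ c (gg c s)));
   [| exact HY2 | exact HA2 | exact HB2 | apply der_prod2; assumption].
 rewrite HZ. rewrite (locally_singleton _ _ HY1).
 rewrite L_tproj by (try assumption; split; assumption). cbv zeta.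
 rewrite EB. assert (HS := SS_pos (ff c t) (gg c s)).
 set (p := ff c t) in *. set (q := gg c s) in *.
 unfold nnA, nnB, ez.
 clearbody p q. apply V3ext; vsimp; toR. field. lra. field. lra. unfold SS, PP, QQ, kk in *. field. split; [assumption|lra]. Qed.


Ltac ffin := toR; unfold SS, PP, QQ, kk in *; field; repeat split; try assumption; try lra.

Definition hh c a2 b2 a_ b_ p q := a2*a_*PP c p+b2*b_*QQ c q.
Definition Alf c a2 b2 a_ b_ p q := hh c a2 b2 a_ b_ p q*p/SS p q+(a_*p+b_*q)*a2.
Definition Bef c a2 b2 a_ b_ p q := hh c a2 b2 a_ b_ p q*q/SS p q+(a_*p+b_*q)*b2.
Definition dAlp c a2 b2 a_ b_ p q :=
  (2*a2*a_*c*p*p+hh c a2 b2 a_ b_ p q)/SS p q-hh c a2 b2 a_ b_ p q*p*(2*p)/(SS p q)^2+a_*a2.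
Definition dAlq c a2 b2 a_ b_ p q :=
  2*b2*b_*kk c*q*p/SS p q-hh c a2 b2 a_ b_ p q*p*(2*q)/(SS p q)^2+b_*a2.
Definition dBep c a2 b2 a_ b_ p q :=
  2*a2*a_*c*p*q/SS p q-hh c a2 b2 a_ b_ p q*q*(2*p)/(SS p q)^2+a_*b2.
Definition dBeq c a2 b2 a_ b_ p q :=
  (2*b2*b_*kk c*q*q+hh c a2 b2 a_ b_ p q)/SS p q-hh c a2 b2 a_ b_ p q*q*(2*q)/(SS p q)^2+b_*b2.
Definition NA c a b a2 b2 a_ b_ p q := nnA c a b (Alf c a2 b2 a_ b_ p q) (Bef c a2 b2 a_ b_ p q)
   (dAlp c a2 b2 a_ b_ p q * PP c p) (dAlq c a2 b2 a_ b_ p q * QQ c q) p q.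
Definition NB c a b a2 b2 a_ b_ p q := nnB c a b (Alf c a2 b2 a_ b_ p q) (Bef c a2 b2 a_ b_ p q)
   (dBep c a2 b2 a_ b_ p q * PP c p) (dBeq c a2 b2 a_ b_ p q * QQ c q) p q.
Definition dotp A B a b p q := A*a+B*b+(A*p+B*q)*(a*p+b*q).

Lemma core c a1 b1 a2 b2 p q : 2*c-1 <> 0 ->
 / 2 * (dotp (NA c a1 b1 a2 b2 a2 b2 p q - NA c a2 b2 a1 b1 a2 b2 p q)
             (NB c a1 b1 a2 b2 a2 b2 p q - NB c a2 b2 a1 b1 a2 b2 p q) a1 b1 p q
      + dotp (NA c a2 b2 a1 b1 a1 b1 p q - NA c a1 b1 a2 b2 a1 b1 p q)
             (NB c a2 b2 a1 b1 a1 b1 p q - NB c a1 b1 a2 b2 a1 b1 p q) a2 b2 p q)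
 = (a1*b2-a2*b1)^2*(p^2+q^2)/2.
Proof.
intros H.
assert (HS: SS p q <> 0) by (unfold SS; nra).
unfold NA, NB, nnA, nnB, dotp, dAlp, dAlq, dBep, dBeq, Alf, Bef, hh, PP, QQ, kk.
unfold SS in *.
field. split; auto.
Qed.

Lemma text_eq c a b z t s : c <> 0 -> 2*c-1 <> 0 -> good c t s ->
  text (usol c) (mkV a b z) t s = mkV a b (a*ff c t + b*gg c s).
Proof. intros Hc H2 [Ht Hs]. unfold text. rewrite L_pux, L_puy by assumption. reflexivity. Qed.

Lemma L_inner c a2 b2 z2 a_ b_ z_ t s : c <> 0 -> 2*c-1 <> 0 -> good c t s ->
 nablaM (usol c) ez (text (usol c) (mkV a2 b2 z2)) (text (usol c) (mkV a_ b_ z_)) t s =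
 mkV (Alf c a2 b2 a_ b_ (ff c t) (gg c s)) (Bef c a2 b2 a_ b_ (ff c t) (gg c s))
     (Alf c a2 b2 a_ b_ (ff c t) (gg c s) * ff c t + Bef c a2 b2 a_ b_ (ff c t) (gg c s) * gg c s).
Proof.
 intros Hc H2 Hg. pose proof Hg as [Ht Hs].
 rewrite (L_nab_gen c a2 b2 _ _ t s (fun _ => a_) (fun _ => b_) (fun _ => a_) (fun _ => b_) 0 0 0 0);
  try assumption; try reflexivity.
 - assert (HS := SS_pos (ff c t) (gg c s)).
   unfold nnA, nnB, Alf, Bef, hh. apply V3ext; vsimp; ffin.
 - apply text_eq; assumption.
 - eapply filter_imp; [|apply (loc1 c t); exact Ht]. intros r Hr. cbv beta in Hr. apply text_eq; try split; assumption.
 - eapply filter_imp; [|apply (loc2 c s); assumption]. intros r Hr. cbv beta in Hr. apply text_eq; try split; assumption.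
 - exact (is_derive_const _ _).
 - exact (is_derive_const _ _).
 - exact (is_derive_const _ _).
 - exact (is_derive_const _ _).
Qed.


Lemma dAlp_ok c a2 b2 a_ b_ p0 q : 2*c-1 <> 0 ->
  is_derive (fun p => Alf c a2 b2 a_ b_ p q) p0 (dAlp c a2 b2 a_ b_ p0 q).
Proof. intros H2. assert (HS := SS_pos p0 q). unfold Alf, dAlp, hh, PP, QQ, kk.
 unfold SS in *. auto_derive. lra. ffin. Qed.
Lemma dAlq_ok c a2 b2 a_ b_ p q0 : 2*c-1 <> 0 ->
  is_derive (fun q => Alf c a2 b2 a_ b_ p q) q0 (dAlq c a2 b2 a_ b_ p q0).
Proof. intros H2. assert (HS := SS_pos p q0). unfold Alf, dAlq, hh, PP, QQ, kk.
 unfold SS in *. auto_derive. lra. ffin. Qed.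
Lemma dBep_ok c a2 b2 a_ b_ p0 q : 2*c-1 <> 0 ->
  is_derive (fun p => Bef c a2 b2 a_ b_ p q) p0 (dBep c a2 b2 a_ b_ p0 q).
Proof. intros H2. assert (HS := SS_pos p0 q). unfold Bef, dBep, hh, PP, QQ, kk.
 unfold SS in *. auto_derive. lra. ffin. Qed.
Lemma dBeq_ok c a2 b2 a_ b_ p q0 : 2*c-1 <> 0 ->
  is_derive (fun q => Bef c a2 b2 a_ b_ p q) q0 (dBeq c a2 b2 a_ b_ p q0).
Proof. intros H2. assert (HS := SS_pos p q0). unfold Bef, dBeq, hh, PP, QQ, kk.
 unfold SS in *. auto_derive. lra. ffin. Qed.

Lemma comp_f (F : R -> R) dF c x : 0 < cos (c*x) -> is_derive F (ff c x) dF ->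
  is_derive (fun r => F (ff c r)) x (dF * PP c (ff c x)).
Proof. intros H HF. eapply is_derive_val.
 apply (is_derive_comp F (ff c)). exact HF. apply L_f; exact H.
 change (PP c (ff c x) * dF = dF * PP c (ff c x)). ring. Qed.

Lemma comp_g (F : R -> R) dF c s : 2*c-1 <> 0 -> 0 < cos (c*s/(2*c-1)) -> is_derive F (gg c s) dF ->
  is_derive (fun r => F (gg c r)) s (dF * QQ c (gg c s)).
Proof. intros H2 H HF. eapply is_derive_val.
 apply (is_derive_comp F (gg c)). exact HF. apply L_g; assumption.
 change (QQ c (gg c s) * dF = dF * QQ c (gg c s)). ring. Qed.

Lemma L_outer c a1 b1 z1 a2 b2 z2 a_ b_ z_ x y : c <> 0 -> 2*c-1 <> 0 -> good c x y ->
 nablaM (usol c) ez (text (usol c) (mkV a1 b1 z1))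
   (nablaM (usol c) ez (text (usol c) (mkV a2 b2 z2)) (text (usol c) (mkV a_ b_ z_))) x y =
 mkV (NA c a1 b1 a2 b2 a_ b_ (ff c x) (gg c y)) (NB c a1 b1 a2 b2 a_ b_ (ff c x) (gg c y))
     (NA c a1 b1 a2 b2 a_ b_ (ff c x) (gg c y) * ff c x + NB c a1 b1 a2 b2 a_ b_ (ff c x) (gg c y) * gg c y).
Proof.
 intros Hc H2 Hg. pose proof Hg as [Ht Hs].
 rewrite (L_nab_gen c a1 b1 _ _ x y
   (fun r => Alf c a2 b2 a_ b_ (ff c r) (gg c y)) (fun r => Bef c a2 b2 a_ b_ (ff c r) (gg c y))
   (fun r => Alf c a2 b2 a_ b_ (ff c x) (gg c r)) (fun r => Bef c a2 b2 a_ b_ (ff c x) (gg c r))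
   (dAlp c a2 b2 a_ b_ (ff c x) (gg c y) * PP c (ff c x))
   (dBep c a2 b2 a_ b_ (ff c x) (gg c y) * PP c (ff c x))
   (dAlq c a2 b2 a_ b_ (ff c x) (gg c y) * QQ c (gg c y))
   (dBeq c a2 b2 a_ b_ (ff c x) (gg c y) * QQ c (gg c y))); try assumption; try reflexivity.
 - apply text_eq; assumption.
 - eapply filter_imp; [|apply (loc1 c x); exact Ht]. intros r Hr. cbv beta in Hr.
   apply L_inner; try split; assumption.
 - eapply filter_imp; [|apply (loc2 c y); assumption]. intros r Hr. cbv beta in Hr.
   apply L_inner; try split; assumption.
 - apply (comp_f (fun p => Alf c a2 b2 a_ b_ p (gg c y))); [assumption|apply dAlp_ok; assumption].
 - apply (comp_f (fun p => Bef c a2 b2 a_ b_ p (gg c y))); [assumption|apply dBep_ok; assumption].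
 - apply (comp_g (fun q => Alf c a2 b2 a_ b_ (ff c x) q)); [assumption|assumption|apply dAlq_ok; assumption].
 - apply (comp_g (fun q => Bef c a2 b2 a_ b_ (ff c x) q)); [assumption|assumption|apply dBeq_ok; assumption].
Qed.

Lemma vder_text_x c a b z x y : c <> 0 -> 2*c-1 <> 0 -> good c x y ->
  vderive (fun t => text (usol c) (mkV a b z) t y) x = mkV 0 0 (0 * ff c x + a * PP c (ff c x) + 0 * gg c y).
Proof. intros Hc H2 Hg. pose proof Hg as [Ht Hs].
 apply (L_vderive_loc _ x (fun _ => a) (fun _ => b) (fun r => a * ff c r + b * gg c y)).
 - eapply filter_imp; [|apply (loc1 c x); exact Ht]. intros r Hr. cbv beta in Hr.
   apply text_eq; try split; assumption.
 - exact (is_derive_const _ _).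
 - exact (is_derive_const _ _).
 - apply der_prod1; [assumption | exact (is_derive_const _ _) | exact (is_derive_const _ _)].
Qed.

Lemma vder_text_y c a b z x y : c <> 0 -> 2*c-1 <> 0 -> good c x y ->
  vderive (fun t => text (usol c) (mkV a b z) x t) y = mkV 0 0 (0 * ff c x + 0 * gg c y + b * QQ c (gg c y)).
Proof. intros Hc H2 Hg. pose proof Hg as [Ht Hs].
 apply (L_vderive_loc _ y (fun _ => a) (fun _ => b) (fun r => a * ff c x + b * gg c r)).
 - eapply filter_imp; [|apply (loc2 c y); assumption]. intros r Hr. cbv beta in Hr.
   apply text_eq; try split; assumption.
 - exact (is_derive_const _ _).
 - exact (is_derive_const _ _).
 - apply der_prod2; [assumption | assumption | exact (is_derive_const _ _) | exact (is_derive_const _ _)].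
Qed.

Lemma nab_zero u C (L V : R -> R -> V3) x y :
  v1 (L x y) = 0 -> v2 (L x y) = 0 -> v3 (L x y) = 0 -> nablaM u C L V x y = mkV 0 0 0.
Proof. intros H1 H2 H3. unfold nablaM, tproj, DM. rewrite H1, H2.
 remember (L x y) as w. destruct w as [[w1 w2] w3]. unfold v1, v2, v3 in *; cbn in H1, H2, H3. subst.
 apply V3ext; vsimp; ring. Qed.

Lemma L_lie0 c a1 b1 z1 a2 b2 z2 (V : R -> R -> V3) x y : c <> 0 -> 2*c-1 <> 0 -> good c x y ->
 nablaM (usol c) ez (lieM (text (usol c) (mkV a1 b1 z1)) (text (usol c) (mkV a2 b2 z2))) V x y = mkV 0 0 0.
Proof. intros Hc H2 Hg. apply nab_zero; unfold lieM, DM;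
 rewrite !vder_text_x, !vder_text_y by assumption; unfold text; vsimp; ring. Qed.

Lemma Ktilde_eq P e1 e2 : Ktilde ez P e1 e2 =
  / 2 * (v3 e2 ^ 2 * dot e1 e1 - v3 e2 * v3 e1 * dot e2 e1
       + v3 e1 ^ 2 * dot e2 e2 - v3 e1 * v3 e2 * dot e1 e2).
Proof. unfold Ktilde, Rtilde, snm, lie3, nabla0, vderive, cstV.
 repeat rewrite Derive_const.
 destruct e1 as [[a1 b1] c1], e2 as [[a2 b2] c2]. unfold ez. vsimp. ring. Qed.

Lemma L_tan c a b z x y : c <> 0 -> 2*c-1 <> 0 -> good c x y ->
  tangent (usol c) x y (mkV a b z) -> z = a * ff c x + b * gg c y.
Proof. intros Hc H2 [Ht Hs] H. unfold tangent, normal in H.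
 rewrite L_pux, L_puy in H by assumption.
 set (r := sqrt (1 + ff c x ^ 2 + gg c y ^ 2)) in H.
 assert (Hr : 0 < r) by (apply sqrt_lt_R0; assert (HS := SS_pos (ff c x) (gg c y)); unfold SS in HS; lra).
 vsimp. unfold vsub, vadd, vscal, dot, mkV, v1, v2, v3 in H; cbn [fst snd] in H.
 assert (E : / r * (z - (a * ff c x + b * gg c y)) = 0) by (rewrite <- H; ring).
 apply Rmult_integral in E. destruct E as [E|E].
 - exfalso. apply (Rinv_neq_0_compat r); lra.
 - lra.
Qed.

Lemma KM_eq c a1 b1 a2 b2 x y : c <> 0 -> 2*c-1 <> 0 -> good c x y ->
  KM (usol c) ez x y (mkV a1 b1 (a1 * ff c x + b1 * gg c y)) (mkV a2 b2 (a2 * ff c x + b2 * gg c y))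
  = (a1*b2-a2*b1)^2*(ff c x^2+gg c y^2)/2.
Proof. intros Hc H2 Hg. rewrite <- (core c a1 b1 a2 b2 (ff c x) (gg c y) H2).
 unfold KM, RM. rewrite !L_lie0 by assumption. rewrite !L_outer by assumption.
 unfold dotp. vsimp. ring. Qed.

Theorem mainTheorem4 :
  forall (c : R), c <> 0 -> c <> 1 / 2 ->
  forall (Omega : R -> R -> Prop), open2 Omega -> connected2 Omega ->
  (forall x y, Omega x y -> 0 < cos (c * x) /\ 0 < cos (c * y / (2 * c - 1))) ->
  forall x y, Omega x y ->
  forall e1 e2 : V3, orthonormal e1 e2 ->
    tangent (usol c) x y e1 -> tangent (usol c) x y e2 ->
    KM (usol c) ez x y e1 e2 = Ktilde ez (graph (usol c) x y) e1 e2.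
Proof.
 intros c Hc Hc12 Omega _ _ Hgood x y Hxy e1 e2 Hon Ht1 Ht2.
 assert (H2 : 2*c-1 <> 0) by (intro E; apply Hc12; lra).
 assert (Hg : good c x y) by (apply Hgood; exact Hxy).
 destruct e1 as [[a1 b1] z1], e2 as [[a2 b2] z2].
 change (a1, b1, z1) with (mkV a1 b1 z1) in *. change (a2, b2, z2) with (mkV a2 b2 z2) in *.
 pose proof (L_tan c a1 b1 z1 x y Hc H2 Hg Ht1) as E1.
 pose proof (L_tan c a2 b2 z2 x y Hc H2 Hg Ht2) as E2.
 subst z1 z2.
 rewrite KM_eq by assumption. rewrite Ktilde_eq.
 destruct Hon as [H11 [H22 H12]].
 assert (H21 : dot (mkV a2 b2 (a2 * ff c x + b2 * gg c y)) (mkV a1 b1 (a1 * ff c x + b1 * gg c y)) = 0)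
   by (rewrite <- H12; unfold dot; vsimp; ring).
 rewrite H11, H22, H12, H21.
 set (p := ff c x) in *. set (q := gg c y) in *.
 assert (Id : (a1*p+b1*q)^2 + (a2*p+b2*q)^2 - (a1*b2-a2*b1)^2*(p^2+q^2) =
   - ((a2*p+b2*q)^2 * (dot (mkV a1 b1 (a1 * p + b1 * q)) (mkV a1 b1 (a1 * p + b1 * q)) - 1)
      - 2*(a2*p+b2*q)*(a1*p+b1*q) * dot (mkV a1 b1 (a1 * p + b1 * q)) (mkV a2 b2 (a2 * p + b2 * q))
      + (a1*p+b1*q)^2 * (dot (mkV a2 b2 (a2 * p + b2 * q)) (mkV a2 b2 (a2 * p + b2 * q)) - 1)))
   by (vsimp; ring).
 rewrite H11, H22, H12 in Id.
 vsimp. lra.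
Qed.
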